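(* Let $(G,* )$ be a topological group which has property ${\sf S}_c(\mathcal{O}_{\sf nbd},\mathcal{O})$ as well as the Hurewicz property. Then for any topological group $(H,* )$ satisfying ${\sf S}_c(\mathcal{O}_{\sf nbd},\Lambda)$, the product group $G\times H$ satisfies ${\sf S}_c(\mathcal{O}_{\sf nbd},\mathcal{O})$.
   Context: For a topological group $(G,* )$ with identity $e$ and a neighborhood $U$ of $e$, $\mathcal{O}(U)=\{x*U:x\in G\}$ and $\mathcal{O}_{\sf nbd}=\{\mathcal{O}(U):U\text{ a neighborhood of }e\}$. $\mathcal{O}$ is the collection of all open covers. An open cover is large if each point of the space is contained in infinitely many elements of the cover; $\Lambda$ denotes the collection of large open covers. A family $\mathcal{B}$ refines $\mathcal{A}$ if every member of $\mathcal{B}$ is contained in some member of $\mathcal{A}$. ${\sf S}_c(\mathcal{A},\mathcal{B})$: for each sequence $(A_n:n<\infty)$ of elements of $\mathcal{A}$ there is a sequence $(B_n:n<\infty)$ such that each $B_n$ is a pairwise disjoint family of open sets refining $A_n$ and $\bigcup_nB_n\in\mathcal{B}$. A space $X$ has the Hurewicz property if for each sequence $(\mathcal{U}_n:n<\infty)$ of open covers of $X$ there are finite $\mathcal{F}_n\subseteq\mathcal{U}_n$ such that for each $x\in X$ the set $\{n:x\notin\bigcup\mathcal{F}_n\}$ is finite. *)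

(* Defs.v *)
From Stdlib Require Import List Arith.
Import ListNotations.
Set Implicit Arguments.

Definition family (X : Type) := (X -> Prop) -> Prop.

Record TopGroup := {
  carrier :> Type;
  gop : carrier -> carrier -> carrier;
  ginv : carrier -> carrier;
  gid : carrier;
  opens : family carrier;
  gassoc : forall x y z, gop x (gop y z) = gop (gop x y) z;
  gid_l : forall x, gop gid x = x;
  gid_r : forall x, gop x gid = x;
  ginv_l : forall x, gop (ginv x) x = gid;
  ginv_r : forall x, gop x (ginv x) = gid;
  open_full : opens (fun _ => True);
  open_inter : forall A B, opens A -> opens B -> opens (fun x => A x /\ B x);
  open_union : forall F : family carrier, (forall A, F A -> opens A) ->
                 opens (fun x => exists A, F A /\ A x);
  (* continuity of multiplication G x G -> G (product topology), written out pointwise *)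
  gop_cont : forall U, opens U -> forall x y, U (gop x y) ->
     exists V W, opens V /\ opens W /\ V x /\ W y /\
       forall a b, V a -> W b -> U (gop a b);
  ginv_cont : forall U, opens U -> opens (fun x => U (ginv x))
}.

Section Notions.
Variables (X : Type) (op : X -> X -> X) (e : X) (opens : family X).

Definition set_eq (A B : X -> Prop) := forall y, A y <-> B y.

Definition ltrans (x : X) (U : X -> Prop) : X -> Prop :=
  fun y => exists u, U u /\ y = op x u.

Definition nbd_e (U : X -> Prop) := opens U /\ U e.

Definition Ocov (U : X -> Prop) : family X :=
  fun A => exists x, set_eq A (ltrans x U).

Definition O_nbd : family X -> Prop :=
  fun F => exists U, nbd_e U /\ forall A, F A <-> Ocov U A.

Definition open_cover (F : family X) : Prop :=
  (forall A, F A -> opens A) /\ (forall x, exists A, F A /\ A x).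

Definition O_all : family X -> Prop := open_cover.

(* large open covers: every point lies in infinitely many (distinct) members *)
Definition large_cover (F : family X) : Prop :=
  open_cover F /\
  forall x, ~ exists l : list (X -> Prop),
      forall A, F A -> A x -> exists B, In B l /\ set_eq A B.

Definition Lambda : family X -> Prop := large_cover.

Definition refines (B A : family X) := forall V, B V -> exists W, A W /\ (forall y, V y -> W y).

Definition pairwise_disjoint (B : family X) :=
  forall V W, B V -> B W -> (exists y, V y /\ W y) -> set_eq V W.

Definition Sc (CA CB : family X -> Prop) : Prop :=
  forall An : nat -> family X, (forall n, CA (An n)) ->
    exists Bn : nat -> family X,
      (forall n, pairwise_disjoint (Bn n) /\ (forall V, Bn n V -> opens V)
                 /\ refines (Bn n) (An n)) /\
      CB (fun V => exists n, Bn n V).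

Definition Hurewicz : Prop :=
  forall Un : nat -> family X, (forall n, open_cover (Un n)) ->
    exists Fn : nat -> list (X -> Prop),
      (forall n A, In A (Fn n) -> Un n A) /\
      forall x, exists N, forall n, N <= n -> exists A, In A (Fn n) /\ A x.

End Notions.

Definition prod_op (G H : TopGroup) (p q : G * H) : G * H :=
  (gop G (fst p) (fst q), gop H (snd p) (snd q)).

Definition prod_id (G H : TopGroup) : G * H := (gid G, gid H).

Definition prod_opens (G H : TopGroup) : family (G * H) :=
  fun O => forall p, O p -> exists A B, opens G A /\ opens H B /\
     A (fst p) /\ B (snd p) /\ forall a b, A a -> B b -> O (a, b).

(* Main.v *)
Require Import Defs.
From Stdlib Require Import List Arith Lia Classical ClassicalEpsilon Cantor
  FunctionalExtensionality PropExtensionality.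
Import ListNotations.

Lemma my_choice (A B : Type) (R : A -> B -> Prop) :
  (forall a, exists b, R a b) -> exists f : A -> B, forall a, R a (f a).
Proof.
  intro H. exists (fun a => proj1_sig (constructive_indefinite_description _ (H a))).
  intro a. exact (proj2_sig (constructive_indefinite_description _ (H a))).
Qed.
Arguments my_choice {A B} R _.

Lemma open_ext (X : Type) (op : family X) (A B : X -> Prop) :
  op A -> (forall y, A y <-> B y) -> op B.
Proof.
  intros HA E. replace B with A; auto.
  extensionality y. apply propositional_extensionality. apply E.
Qed.

Lemma open_bounded (H : TopGroup) (P : nat -> H -> Prop) (m : nat) :
  (forall n, opens H (P n)) -> opens H (fun y => forall n, n <= m -> P n y).
Proof.
  intro HP. induction m as [|m IH].
  - apply (@open_ext _ _ _ _ (HP 0)). intro y; split.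
    + intros h n hn. replace n with 0 by lia. exact h.
    + intro h; apply h; lia.
  - apply (@open_ext _ _ _ _ (open_inter H _ _ IH (HP (S m)))). intro y; split.
    + intros [h1 h2] n hn. destruct (Nat.eq_dec n (S m)) as [->|ne]; auto.
      apply h1; lia.
    + intro h; split; auto.
Qed.

Lemma to_nat_inj p q : to_nat p = to_nat q -> p = q.
Proof. intro e. rewrite <- (cancel_of_to p), <- (cancel_of_to q), e. reflexivity. Qed.

Lemma list_bound (X : Type) (C : nat -> family X) (l : list (X->Prop)) :
  (forall A, In A l -> exists n, C n A) ->
  exists m, forall A, In A l -> exists n, n <= m /\ C n A.
Proof.
  induction l as [|a l IH]; intro h.
  - exists 0. intros A [].
  - destruct IH as [m Hm]. { intros A HA; apply h; right; exact HA. }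
    destruct (h a (or_introl eq_refl)) as [n Hn].
    exists (max m n). intros A [<-|HA].
    + exists n; split; [lia|exact Hn].
    + destruct (Hm A HA) as [n' [h1 h2]]. exists n'; split; [lia|exact h2].
Qed.

Lemma finite_reps (Y : Type) (D : nat -> family Y) (y : Y) (N : nat) :
  (forall k, pairwise_disjoint (D k)) ->
  exists l : list (Y -> Prop), forall k A, k < N -> D k A -> A y ->
     exists B, In B l /\ set_eq A B.
Proof.
  intro Hd. induction N as [|N IH].
  - exists []. intros; lia.
  - destruct IH as [l Hl].
    destruct (classic (exists A0, D N A0 /\ A0 y)) as [[A0 [h1 h2]]|hn].
    + exists (A0 :: l). intros k A hk hA hy.
      destruct (Nat.eq_dec k N) as [->|ne].
      * exists A0; split; [left; reflexivity|].
        apply (Hd N A A0 hA h1). exists y; split; assumption.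
      * destruct (Hl k A ltac:(lia) hA hy) as [B [h3 h4]].
        exists B; split; [right; exact h3|exact h4].
    + exists l. intros k A hk hA hy.
      destruct (Nat.eq_dec k N) as [->|ne].
      * exfalso; apply hn; exists A; split; assumption.
      * apply (Hl k A ltac:(lia) hA hy).
Qed.

Theorem theorem3p5 (G : TopGroup) :
  Sc (opens G) (O_nbd (gop G) (gid G) (opens G)) (O_all (opens G)) ->
  Hurewicz (opens G) ->
  forall H : TopGroup,
    Sc (opens H) (O_nbd (gop H) (gid H) (opens H)) (Lambda (opens H)) ->
    Sc (prod_opens G H) (O_nbd (prod_op G H) (prod_id G H) (prod_opens G H))
       (O_all (prod_opens G H)).
Proof.
  intros hG hHur H hH An HAn.
  destruct (my_choice (fun n (W : G * H -> Prop) =>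
     nbd_e (prod_id G H) (prod_opens G H) W /\
     forall A, An n A <-> Ocov (prod_op G H) W A) HAn) as [W HW].
  assert (HUV : forall n, exists UV : (G -> Prop) * (H -> Prop),
     opens G (fst UV) /\ fst UV (gid G) /\ opens H (snd UV) /\ snd UV (gid H) /\
     forall a b, fst UV a -> snd UV b -> W n (a, b)).
  { intro n. destruct (HW n) as [[Wo We] _].
    destruct (Wo _ We) as [A [B [h1 [h2 [h3 [h4 h5]]]]]].
    exists (A, B). simpl. repeat split; auto. }
  destruct (my_choice _ HUV) as [UV HUV'].
  set (U := fun n => fst (UV n)). set (V := fun n => snd (UV n)).
  assert (HC : forall k, exists Ck : nat -> family G,
     (forall n, pairwise_disjoint (Ck n) /\ (forall Z, Ck n Z -> opens G Z) /\
        refines (Ck n) (Ocov (gop G) (U (to_nat (k, n))))) /\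
     O_all (opens G) (fun Z => exists n, Ck n Z)).
  { intro k. apply hG. intro n. exists (U (to_nat (k, n))). split.
    - unfold U. destruct (HUV' (to_nat (k, n))) as [h1 [h2 _]]. split; assumption.
    - intro A; tauto. }
  destruct (my_choice _ HC) as [C HC'].
  destruct (hHur (fun k A => exists n, C k n A)) as [Fn [HF1 HF2]].
  { intro k. exact (proj2 (HC' k)). }
  assert (Hm : forall k, exists m, forall A, In A (Fn k) -> exists n, n <= m /\ C k n A).
  { intro k. apply list_bound. intros A hA. apply (HF1 k A hA). }
  destruct (my_choice _ Hm) as [m Hm'].
  set (V' := fun k y => forall n, n <= m k -> V (to_nat (k, n)) y).
  destruct (hH (fun k => Ocov (gop H) (V' k))) as [D [HD1 HD2]].
  { intro k. exists (V' k). split.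
    - split.
      + apply open_bounded. intro n. unfold V. apply (HUV' (to_nat (k, n))).
      + intros n _. unfold V. apply (HUV' (to_nat (k, n))).
    - intro A; tauto. }
  exists (fun j P => exists k n, j = to_nat (k, n) /\ n <= m k /\
     exists Cs Ds, C k n Cs /\ D k Ds /\ P = (fun p => Cs (fst p) /\ Ds (snd p))).
  assert (Hop : forall k n Cs Ds, C k n Cs -> D k Ds ->
     prod_opens G H (fun p => Cs (fst p) /\ Ds (snd p))).
  { intros k n Cs Ds hC hD p [h1 h2]. exists Cs, Ds.
    repeat split; auto.
    - exact (proj1 (proj2 (proj1 (HC' k) n)) Cs hC).
    - exact (proj1 (proj2 (HD1 k)) Ds hD). }
  split.
  - intro j. split; [|split].
    + intros P Q [k [n [-> [hn [Cs [Ds [hC [hD ->]]]]]]]]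
        [k' [n' [e [hn' [Cs' [Ds' [hC' [hD' ->]]]]]]]] [[a b] [[h1 h2] [h3 h4]]].
      apply to_nat_inj in e. injection e as <- <-.
      assert (E1 := proj1 (proj1 (HC' k) n) Cs Cs' hC hC' (ex_intro _ a (conj h1 h3))).
      assert (E2 := proj1 (HD1 k) Ds Ds' hD hD' (ex_intro _ b (conj h2 h4))).
      intro p. simpl. rewrite (E1 (fst p)), (E2 (snd p)). tauto.
    + intros P [k [n [_ [_ [Cs [Ds [hC [hD ->]]]]]]]]. eauto.
    + intros P [k [n [-> [hn [Cs [Ds [hC [hD ->]]]]]]]].
      destruct (proj2 (proj2 (proj1 (HC' k) n)) Cs hC) as [Wc [[g Eg] hCW]].
      destruct (proj2 (proj2 (HD1 k)) Ds hD) as [Wd [[h Eh] hDW]].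
      exists (ltrans (prod_op G H) (g,h) (W (to_nat (k,n)))). split.
      * apply (proj2 (proj2 (HW _) _)). exists (g,h). intro y; tauto.
      * intros [a b] [ha hb]. simpl in ha, hb.
        destruct (proj1 (Eg a) (hCW a ha)) as [u [hu ->]].
        destruct (proj1 (Eh b) (hDW b hb)) as [v [hv ->]].
        exists (u,v). split; [|reflexivity].
        apply (proj2 (proj2 (proj2 (proj2 (HUV' _))))); [exact hu| exact (hv n hn)].
  - split.
    + intros P [j [k [n [_ [_ [Cs [Ds [hC [hD ->]]]]]]]]]. eauto.
    + intros [x y]. destruct (HF2 x) as [N HN].
      assert (Hk : exists k, N <= k /\ exists Ds, D k Ds /\ Ds y).
      { apply NNPP; intro hn.
        destruct (@finite_reps _ D y N (fun k => proj1 (HD1 k))) as [l Hl].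
        apply (proj2 HD2 y). exists l. intros A [k hA] hy.
        destruct (le_lt_dec N k) as [hk|hk].
        - exfalso; apply hn; eauto.
        - apply Hl with k; auto. }
      destruct Hk as [k [hk [Ds [hD hy]]]].
      destruct (HN k hk) as [A [hA hx]].
      destruct (Hm' k A hA) as [n [hn hC]].
      exists (fun p => A (fst p) /\ Ds (snd p)). split.
      * exists (to_nat (k,n)), k, n. split; [reflexivity|]. split; [exact hn|].
        exists A, Ds. auto.
      * simpl; auto.
Qed.
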